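(* Let $p\ge2$, $m\ge1$, $d\ge1$ be integers, and let $W\in\mathbb{R}^{d\times p}$, $V\in\mathbb{R}^{p\times d}$. If the ReLU network $s^\theta(x)=V\,\mathrm{ReLU}(Wx)$ exactly realizes modular addition on $\mathcal{X}_m$, i.e. $h_\theta(x)=y(x)$ for every $x\in\mathcal{X}_m$, then \[ d\ \ge\ \frac{m-p}{p+2}. \]
   Context: Let $[p]=\{0,1,\dots,p-1\}$ and $\mathcal{X}_m=\{x\in\{0,1,\dots,m\}^p:\ \|x\|_1=m\}$, with coordinates of $x$ indexed by $[p]$. The label of $x$ is $y(x)=(\sum_{r\in[p]} r\,x_r)\bmod p\in[p]$. $\mathrm{ReLU}(t)=\max\{0,t\}$ is applied entrywise. For a score vector $s^\theta(x)\in\mathbb{R}^p$ with coordinates indexed by $[p]$, the predictor is $h_\theta(x)=\ell$ if $s^\theta_\ell(x)>s^\theta_k(x)$ for all $k\ne\ell$, and $h_\theta(x)=\bot$ (invalid, never equal to a label) otherwise. *)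

(* Defs.v *)
From mathcomp Require Import all_boot all_order all_algebra.
From mathcomp Require Import reals.
Set Implicit Arguments. Unset Strict Implicit. Unset Printing Implicit Defensive.
Import Order.TTheory GRing.Theory Num.Theory.
Local Open Scope ring_scope.

Definition inXm (p m : nat) (x : 'I_p -> nat) : Prop :=
  (forall r, (x r <= m)%N) /\ (\sum_(r < p) x r)%N = m.

Definition label (p : nat) (x : 'I_p -> nat) : nat :=
  ((\sum_(r < p) (nat_of_ord r * x r)) %% p)%N.

Definition relu (R : realType) (t : R) : R := Num.max 0 t.

Definition score (R : realType) (p d : nat) (W : 'M[R]_(d, p)) (V : 'M[R]_(p, d))
  (x : 'I_p -> nat) : 'cV[R]_p :=
  V *m map_mx (@relu R) (W *m \col_(r < p) ((x r)%:R : R)).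

(* predictor: Some l if l is the unique strict argmax of s, None (= bottom) otherwise *)
Definition predict (R : realType) (p : nat) (s : 'cV[R]_p) : option nat :=
  if [pick l : 'I_p | [forall k : 'I_p, (k != l) ==> (s k ord0 < s l ord0)]]
    is Some l then Some (nat_of_ord l) else None.

(* Main.v *)
Require Import Defs.
From mathcomp Require Import all_boot all_order all_algebra reals zify.
From mathcomp Require Import ring lra.
Import Order.TTheory GRing.Theory Num.Theory.
Local Open Scope ring_scope.
Lemma modS_neq (a P : nat) : (1 < P)%N -> (a.+1 %% P)%N <> (a %% P)%N.
Proof.
move=> hP /eqP; rewrite eqn_mod_dvd // subSn // subnn dvdn1 => /eqP hP1.
by rewrite hP1 in hP.
Qed.

Lemma relu_comb (R : realType) (x y z c : R) : 0 <= c -> (c+1)*z = c*x + y -> 0 <= x*y ->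
  (c+1)*relu z = c*relu x + relu y.
Proof.
move=> hc hz hxy; rewrite /relu.
have [hx|hx] := lerP 0 x; have [hy|hy] := lerP 0 y.
- have hz0 : 0 <= z by nra.
  by rewrite !max_r.
- have hx0 : x = 0.
    apply/eqP; rewrite eq_le hx andbT; rewrite leNgt; apply/negP => hx1.
    by have := pmulr_rlt0 y hx1; rewrite hy ltNge hxy.
  subst x; have [hz'|hz'] := lerP 0 z; nra.
- have hy0 : y = 0.
    apply/eqP; rewrite eq_le hy andbT; rewrite leNgt; apply/negP => hy1.
    by have := pmulr_llt0 x hy1; rewrite hx ltNge hxy.
  subst y; have [hz'|hz'] := lerP 0 z; nra.
- have [hz'|hz'] := lerP 0 z; nra.
Qed.
Lemma affine_once (R : realType) (al be a b c e : R) : a < b -> b <= c -> c < e ->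
  (al + be * a) * (al + be * b) < 0 -> (al + be * c) * (al + be * e) < 0 -> False.
Proof.
move=> hab hbc hce h1 h2.
set A := al + be * a in h1; set B := al + be * b in h1.
set C := al + be * c in h2; set E := al + be * e in h2.
have key : forall X Y : R, X < Y -> X * Y < 0 -> X < 0 /\ 0 < Y.
  move=> X Y hXY hXY0; split.
    rewrite ltNge; apply/negP => h; nra.
  rewrite ltNge; apply/negP => h; nra.
have key2 : forall X Y : R, Y < X -> X * Y < 0 -> Y < 0 /\ 0 < X.
  move=> X Y hXY hXY0; apply: key => //; by rewrite mulrC.
have [hb|hb] := ltrP 0 be.
- have : be * a < be * b by rewrite ltr_pM2l.
  have : be * b <= be * c by rewrite ler_pM2l.
  have : be * c < be * e by rewrite ltr_pM2l.
  move=> h3 h4 h5.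
  have [_ hB] := key A B ltac:(rewrite /A /B; lra) h1.
  have [hC _] := key C E ltac:(rewrite /C /E; lra) h2.
  rewrite /B /C in hB hC; lra.
- have : be * b <= be * a by rewrite ler_wnM2l // ltW.
  have : be * c <= be * b by rewrite ler_wnM2l.
  have : be * e <= be * c by rewrite ler_wnM2l // ltW.
  move=> h3 h4 h5.
  have [hle|hlt] := eqVneq be 0.
    by move: h1; rewrite /A /B hle !mul0r addr0; nra.
  have hb' : be < 0 by rewrite lt_neqAle hlt hb.
  have : be * b < be * a by rewrite ltr_nM2l.
  have : be * e < be * c by rewrite ltr_nM2l.
  move=> h6 h7.
  have [hB _] := key2 A B ltac:(rewrite /A /B; lra) h1.
  have [_ hC] := key2 C E ltac:(rewrite /C /E; lra) h2.
  rewrite /B /C in hB hC; lra.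
Qed.
Lemma predictP (R : realType) (p : nat) (s : 'cV[R]_p) n : predict s = Some n ->
  exists l : 'I_p, nat_of_ord l = n /\ forall k, k != l -> s k ord0 < s l ord0.
Proof.
rewrite /predict; case: pickP => [l /forallP H|] // [<-].
exists l; split => // k kl; have := H k; by rewrite kl.
Qed.
Section Main.
Variables (R : realType) (p m d : nat) (W : 'M[R]_(d, p.+2)) (V : 'M[R]_(p.+2, d)).

Definition xa (a : nat) : 'I_p.+2 -> nat :=
  fun r => if nat_of_ord r == 0%N then (m - a)%N else if nat_of_ord r == 1%N then a else 0%N.

Definition o1 : 'I_p.+2 := lift ord0 (ord0 : 'I_p.+1).
Definition hh (j : 'I_d) (t : R) : R := m%:R * W j ord0 + (W j o1 - W j ord0) * t.

Lemma Wx a j : (a <= m)%N -> (W *m \col_r ((xa a r)%:R : R)) j ord0 = hh j a%:R.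
Proof.
move=> ha; rewrite !mxE big_ord_recl big_ord_recl big1 => [|i _]; last by rewrite !mxE /xa /= mulr0.
rewrite !mxE /xa /= natrB // /hh /o1; ring.
Qed.

Lemma scoreE a k : (a <= m)%N ->
  score W V (xa a) k ord0 = \sum_j V k j * relu (hh j a%:R).
Proof.
move=> ha; rewrite /score !mxE; apply: eq_bigr => j _; by rewrite mxE -Wx // !mxE.
Qed.

Lemma labelE a : (a <= m)%N -> label (xa a) = (a %% p.+2)%N.
Proof.
move=> ha; rewrite /label big_ord_recl big_ord_recl big1 => [|i _]; last by rewrite /xa /= muln0.
by rewrite /xa /= mul0n mul1n addn0.
Qed.

Lemma inX a : (a <= m)%N -> inXm m (xa a).
Proof.
move=> ha; split.
  move=> r; rewrite /xa; case: ifP => _; first exact: leq_subr.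
  by case: ifP.
rewrite big_ord_recl big_ord_recl big1 => [|i _]; last by rewrite /xa.
by rewrite /xa /= addn0 subnK.
Qed.

Hypothesis H : forall x : 'I_p.+2 -> nat, inXm m x -> predict (score W V x) = Some (label x).

Lemma window a : (a + p.+2 <= m)%N -> exists j, hh j a%:R * hh j (a + p.+2)%:R < 0.
Proof.
move=> ha.
case: (boolP [exists j, hh j a%:R * hh j (a + p.+2)%:R < 0]) => [/existsP //|/existsPn Hn].
exfalso.
have ha0 : (a <= m)%N by lia.
have ha1 : (a.+1 <= m)%N by lia.
have [l0 [e0 h0]] := predictP _ _ _ _ (H _ (inX _ ha0)).
have [l1 [e1 h1]] := predictP _ _ _ _ (H _ (inX _ ha1)).
have [l2 [e2 h2]] := predictP _ _ _ _ (H _ (inX _ ha)).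
rewrite labelE // in e0; rewrite labelE // in e1; rewrite labelE // in e2.
have l20 : l2 = l0 by apply: val_inj; rewrite /= e2 e0 modnDr.
subst l2.
have l10 : l1 != l0.
  apply/eqP => e; move: e1; rewrite e e0 => /esym; exact: modS_neq.
have lin : forall k, (p.+1%:R + 1) * score W V (xa a.+1) k ord0 =
    p.+1%:R * score W V (xa a) k ord0 + score W V (xa (a + p.+2)) k ord0.
  move=> k; rewrite !scoreE // !mulr_sumr -big_split; apply: eq_bigr => j _ /=.
  have E : (p.+1%:R + 1) * relu (hh j a.+1%:R) =
      p.+1%:R * relu (hh j a%:R) + relu (hh j (a + p.+2)%:R).
    apply: relu_comb => //.
      rewrite /hh natrD -!natr1; ring.
    by rewrite leNgt Hn.
  rewrite mulrCA E; ring.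
have L0 := lin l0; have L1 := lin l1.
have l01 : l0 != l1 by rewrite eq_sym.
have A := h1 l0 l01; have B := h0 l1 l10; have C := h2 l1 l10.
move: L0 L1 A B C.
set u0 := score W V (xa a) l0 ord0; set u1 := score W V (xa a) l1 ord0.
set v0 := score W V (xa a.+1) l0 ord0; set v1 := score W V (xa a.+1) l1 ord0.
set w0 := score W V (xa (a + p.+2)) l0 ord0; set w1 := score W V (xa (a + p.+2)) l1 ord0.
have hP : 0 <= (p.+1%:R : R) by [].
move=> L0 L1 A B C; clearbody u0 u1 v0 v1 w0 w1; clear -L0 L1 A B C hP; nra.
Qed.

Lemma countK (hd : (0 < d)%N) : (m %/ p.+2 <= d)%N.
Proof.
set K := (m %/ p.+2)%N.
pose j0 : 'I_d := Ordinal hd.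
pose f (k : 'I_K) : 'I_d :=
  odflt j0 [pick j | hh j (k * p.+2)%:R * hh j (k * p.+2 + p.+2)%:R < 0].
have fP : forall k : 'I_K, hh (f k) (k * p.+2)%:R * hh (f k) (k * p.+2 + p.+2)%:R < 0.
  move=> k; rewrite /f; case: pickP => [j //|Hno] /=.
  have hk : (k * p.+2 + p.+2 <= m)%N.
    have := ltn_ord k; rewrite /K -[(k < _)%N]/(k.+1 <= _)%N leq_divRL // mulSn ; by rewrite addnC.
  have [j hj] := window _ hk.
  by move: (Hno j) hj => /= ->.
have key : forall k1 k2 : 'I_K, (k1 < k2)%N -> f k1 = f k2 -> False.
  move=> k1 k2 lt e.
  have h1 := fP k1; have h2 := fP k2; rewrite e in h1.
  have hab : ((k1 * p.+2)%:R : R) < (k1 * p.+2 + p.+2)%:R by rewrite ltr_nat; lia.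
  have hbc : ((k1 * p.+2 + p.+2)%:R : R) <= (k2 * p.+2)%:R.
    by rewrite ler_nat addnC -mulSn leq_mul2r lt orbT.
  have hce : ((k2 * p.+2)%:R : R) < (k2 * p.+2 + p.+2)%:R by rewrite ltr_nat; lia.
  exact: (affine_once _ _ _ _ _ _ _ hab hbc hce h1 h2).
have finj : injective f.
  move=> k1 k2 e; case: (ltngtP k1 k2) => [lt|lt|/val_inj //]; exfalso.
    exact: (key _ _ lt e).
  exact: (key _ _ lt (esym e)).
by have := leq_card _ finj; rewrite !card_ord.
Qed.

End Main.

Theorem mainTheorem3 (R : realType) (p m d : nat)
  (hp : (2 <= p)%N) (hm : (1 <= m)%N) (hd : (1 <= d)%N)
  (W : 'M[R]_(d, p)) (V : 'M[R]_(p, d)) :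
  (forall x : 'I_p -> nat, inXm m x -> predict (score W V x) = Some (label x)) ->
  (m%:R - p%:R) / (p%:R + 2) <= (d%:R : R).
Proof.
case: p hp W V => [|[|p']] // _ W V HH.
have hK := @countK R p' m d W V HH hd.
have hnat : (m <= d * p'.+2 + p'.+2)%N.
  have := divn_eq m p'.+2; have := ltn_pmod m (ltn0Sn p'.+1).
  have := leq_mul hK (leqnn p'.+2). lia.
have hP : (0 : R) <= p'.+2%:R by rewrite ler0n.
have hD : (0 : R) <= d%:R by rewrite ler0n.
rewrite ler_pdivrMr; last lra.
have h : (m%:R : R) <= d%:R * p'.+2%:R + p'.+2%:R by rewrite -natrM -natrD ler_nat.
have h2 : (0 : R) <= d%:R * 2 by rewrite mulr_ge0.
rewrite mulrDr; lra.
Qed.
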